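(* Let $\mathbf A$ be the Płonka sum of a semilattice directed system of metamorphisms $\{\xi_{pq}:\mathbf A_p\Rightarrow\mathbf A_q: p\preceq q\text{ in }\mathbf I\}$ between algebras of a finite type $\tau$ (with $\mathbf I$ having a least element if $\tau$ contains constants). Then $\mathbf A$ is locally finite if and only if every $\mathbf A_p$ ($p\in I$) is locally finite.
   Context: An algebra is locally finite if every finitely generated subalgebra is finite. A metamorphism $f:\mathbf A\Rightarrow\mathbf B$ between algebras of type $\tau$ assigns to each $n$-ary symbol $\sigma$ maps $f^{\sigma0},\dots,f^{\sigma n}:A\to B$ with $f^{\sigma0}(\sigma^{\mathbf A}(a_1,\dots,a_n))=\sigma^{\mathbf B}(f^{\sigma1}(a_1),\dots,f^{\sigma n}(a_n))$ (for constants $f^{\omega0}(\omega^{\mathbf A})=\omega^{\mathbf B}$); composition and identity are componentwise. A semilattice directed system of metamorphisms over a join-semilattice $\mathbf I=\langle I,\vee\rangle$ (order $\preceq$) is a family of pairwise disjoint algebras $\mathbf A_p$ of type $\tau$ with metamorphisms $\xi_{pq}:\mathbf A_p\Rightarrow\mathbf A_q$ for $p\preceq q$, $\xi_{pp}$ the identity, $\xi_{qr}\circ\xi_{pq}=\xi_{pr}$. Its Płonka sum is the algebra on $\biguplus_pA_p$ with $\sigma(a_1,\dots,a_n):=\sigma^{\mathbf A_q}(\xi^{\sigma1}_{p_1q}(a_1),\dots,\xi^{\sigma n}_{p_nq}(a_n))$ for $a_i\in A_{p_i}$, $q=p_1\vee\dots\vee p_n$, and $\omega:=\omega^{\mathbf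 A_\bot}$ for each constant $\omega$, where $\bot$ is the least element of $\mathbf I$. *)

(* Defs.v *)
From Stdlib Require List.
From mathcomp Require Import all_boot all_order.
Set Implicit Arguments. Unset Strict Implicit. Unset Printing Implicit Defensive.
Import Order.TTheory.
Local Open Scope order_scope.

(* A type tau: finite set of symbols [sym] with arities [ar].  An algebra of
   type tau on carrier T: for each symbol an [ar s]-ary operation. *)
Definition op_family (sym : Type) (ar : sym -> nat) (T : Type) :=
  forall s : sym, ('I_(ar s) -> T) -> T.

(* Components of a metamorphism: for symbol s, index 0 is f^{s0}, index
   lift ord0 i (value i+1) is f^{s(i+1)}. *)
Definition meta_maps (sym : Type) (ar : sym -> nat) (T U : Type) :=
  forall s : sym, 'I_(ar s).+1 -> T -> U.

Definition is_metamorphism (sym : Type) (ar : sym -> nat) (T U : Type)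
  (opT : op_family ar T) (opU : op_family ar U) (f : meta_maps ar T U) : Prop :=
  forall s (args : 'I_(ar s) -> T),
    f s ord0 (opT s args) = opU s (fun i => f s (lift ord0 i) (args i)).

Definition op_closed (sym : Type) (ar : sym -> nat) (T : Type)
  (op : op_family ar T) (S : T -> Prop) : Prop :=
  forall s (args : 'I_(ar s) -> T), (forall i, S (args i)) -> S (op s args).

Definition generated (sym : Type) (ar : sym -> nat) (T : Type)
  (op : op_family ar T) (X : T -> Prop) (x : T) : Prop :=
  forall S : T -> Prop, op_closed op S -> (forall y, X y -> S y) -> S x.

Definition locally_finite (sym : Type) (ar : sym -> nat) (T : Type)
  (op : op_family ar T) : Prop :=
  forall gens : seq T, exists elts : seq T,
    forall x, generated op (fun y => List.In y gens) x -> List.In x elts.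

(* Semilattice directed system of metamorphisms over I (order p <= q).
   xi p q is only constrained for p <= q. *)
Definition directed_system (sym : Type) (ar : sym -> nat)
  (d : Order.disp_t) (I : joinSemilatticeType d) (A : I -> Type)
  (alg : forall p, op_family ar (A p)) (xi : forall p q, meta_maps ar (A p) (A q))
  : Prop :=
  [/\ (forall p q, p <= q -> is_metamorphism (alg p) (alg q) (xi p q)),
      (forall p s i (x : A p), xi p p s i x = x) &
      (forall p q r, p <= q -> q <= r ->
         forall s i (x : A p), xi q r s i (xi p q s i x) = xi p r s i x)].

Fixpoint joinl (d : Order.disp_t) (I : joinSemilatticeType d) (x : I) (l : seq I) : I :=
  match l with [::] => x | y :: l' => joinl (Order.join x y) l' end.

Lemma joinl_ge_init (d : Order.disp_t) (I : joinSemilatticeType d) (l : seq I) :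
  forall x y : I, y <= x -> y <= joinl x l.
Proof.
elim: l => [//|z l IH] x y le_yx /=; apply: IH.
exact: le_trans le_yx (leUl x z).
Qed.

Lemma joinl_ge (d : Order.disp_t) (I : joinSemilatticeType d) (l : seq I) :
  forall (x y : I), y \in l -> y <= joinl x l.
Proof.
elim: l => [//|z l IH] x y /=; rewrite in_cons => /orP [/eqP -> | yl].
  by apply: joinl_ge_init; exact: leUr.
exact: IH.
Qed.

Definition ord_absurd (n : nat) (h : n = 0) (i : 'I_n) : False.
Proof. by case: i => m; rewrite h. Qed.

Section Plonka.
Variables (sym : Type) (ar : sym -> nat) (d : Order.disp_t) (I : joinSemilatticeType d)
  (A : I -> Type) (alg : forall p, op_family ar (A p))
  (xi : forall p q, meta_maps ar (A p) (A q)) (bot : forall s, ar s = 0 -> I).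

Definition plonka_index (s : sym) (args : 'I_(ar s) -> {p : I & A p}) (n : nat)
  (h : ar s = n.+1) : I :=
  let i0 : 'I_(ar s) := Ordinal (eq_ind_r (fun k => 0 < k) (ltn0Sn n) h) in
  joinl (projT1 (args i0)) [seq projT1 (args i) | i <- enum 'I_(ar s)].

Definition plonka_op : op_family ar {p : I & A p} :=
  fun s =>
  match ar s as n return (ar s = n -> ('I_(ar s) -> {p : I & A p}) -> {p : I & A p}) with
  | 0 => fun h _ =>
      existT A (@bot s h) (@alg (@bot s h) s (fun i => False_rect _ (ord_absurd h i)))
  | n.+1 => fun h args =>
      let q := plonka_index args h in
      existT A q (@alg q s (fun i => @xi (projT1 (args i)) q s (lift ord0 i) (projT2 (args i))))
  end erefl.
End Plonka.

(* Main.v *)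
Require Import Defs.
From mathcomp Require Import all_boot all_order.
From Stdlib Require Import Eqdep_dec Lia FunctionalExtensionality.
From mathcomp Require Import zify.
Set Implicit Arguments. Unset Strict Implicit.
Import Order.TTheory.

Lemma plonka_succ (sym : Type) (ar : sym -> nat) (d : Order.disp_t) (I : joinSemilatticeType d)
  (A : I -> Type) (alg : forall p, op_family ar (A p))
  (xi : forall p q, meta_maps ar (A p) (A q)) (bot : forall s, ar s = 0 -> I)
  s args n (h : ar s = n.+1) :
  @plonka_op _ _ _ _ _ alg xi bot s args =
  existT A (plonka_index args h) (alg (plonka_index args h) s
     (fun i => xi (projT1 (args i)) (plonka_index args h) s (lift ord0 i) (projT2 (args i)))).
Proof.
rewrite /plonka_op.
move: (erefl (ar s)).
have: forall m (e : ar s = m),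
  (match m as n0 return (ar s = n0 -> ('I_(ar s) -> {p : I & A p}) -> {p : I & A p}) with
  | 0 => fun h _ =>
      existT A (@bot s h) (@alg (@bot s h) s (fun i => False_rect _ (ord_absurd h i)))
  | n.+1 => fun h args =>
      let q := plonka_index args h in
      existT A q (@alg q s (fun i => @xi (projT1 (args i)) q s (lift ord0 i) (projT2 (args i))))
  end e args) = existT A (plonka_index args h) (alg (plonka_index args h) s
     (fun i => xi (projT1 (args i)) (plonka_index args h) s (lift ord0 i) (projT2 (args i)))).
  case=> [|m] e; first by exfalso; have := etrans (esym e) h.
  have emn : m = n by move: h; rewrite e => -[].
  subst m. by rewrite (eq_irrelevance e h).
by move=> H e; exact: H.
Qed.

Lemma plonka_zero (sym : Type) (ar : sym -> nat) (d : Order.disp_t) (I : joinSemilatticeType d)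
  (A : I -> Type) (alg : forall p, op_family ar (A p))
  (xi : forall p q, meta_maps ar (A p) (A q)) (bot : forall s, ar s = 0 -> I)
  s args (h : ar s = 0) :
  @plonka_op _ _ _ _ _ alg xi bot s args =
  existT A (bot s h) (alg (bot s h) s (fun i => False_rect _ (ord_absurd h i))).
Proof.
rewrite /plonka_op.
have: forall m (e : ar s = m),
  (match m as n0 return (ar s = n0 -> ('I_(ar s) -> {p : I & A p}) -> {p : I & A p}) with
  | 0 => fun h _ =>
      existT A (@bot s h) (@alg (@bot s h) s (fun i => False_rect _ (ord_absurd h i)))
  | n.+1 => fun h args =>
      let q := plonka_index args h in
      existT A q (@alg q s (fun i => @xi (projT1 (args i)) q s (lift ord0 i) (projT2 (args i))))
  end e args) = existT A (bot s h) (alg (bot s h) s (fun i => False_rect _ (ord_absurd h i))).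
  case=> [|m] e; last by exfalso; have := etrans (esym e) h.
  by rewrite (eq_irrelevance e h).
by move=> H; exact: H.
Qed.

Lemma gen_base (sym : Type) (ar : sym -> nat) (T : Type) (op : op_family ar T)
  (X : T -> Prop) x : X x -> generated op X x.
Proof. by move=> Xx S _ XS; exact: XS. Qed.

Lemma gen_closed (sym : Type) (ar : sym -> nat) (T : Type) (op : op_family ar T)
  (X : T -> Prop) : op_closed op (generated op X).
Proof. rewrite /op_closed /generated => s args H S clS XS; apply: (clS) => i; exact: (H i S clS XS). Qed.

Lemma joinl_le (d : Order.disp_t) (I : joinSemilatticeType d) (l : seq I) :
  forall x u : I, (x <= u)%O -> (forall y, y \in l -> (y <= u)%O) -> (joinl x l <= u)%O.
Proof.
elim: l => [//|z l IH] x u xu H /=; apply: IH.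
  by rewrite leUx xu H // mem_head.
by move=> y yl; apply: H; rewrite in_cons yl orbT.
Qed.

Lemma count_eq_sub (T : eqType) (a b : pred T) (s : seq T) :
  (forall x, a x -> b x) -> count a s = count b s -> forall x, x \in s -> b x -> a x.
Proof.
move=> ab; elim: s => [//|y s IH] /= E x.
have le1 : count a s <= count b s by apply: sub_count.
have le2 : (a y : nat) <= b y by case: (a y) (ab y) => // ->.
have [Ey Es] : a y = b y /\ count a s = count b s.
  have E1 : (a y : nat) = b y by lia.
  split; last by lia.
  by move: E1; case: (a y); case: (b y).
rewrite in_cons => /orP [/eqP -> | xs]; first by rewrite Ey.
exact: IH.
Qed.

Lemma memIn (T : eqType) (x : T) (s : seq T) : x \in s -> List.In x s.
Proof. elim: s => [//|y s IH]; rewrite in_cons => /orP [/eqP -> | /IH]; by [left | right]. Qed.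

Lemma In_pmap (T U : Type) (f : T -> option U) (l : seq T) x y :
  List.In x l -> f x = Some y -> List.In y (pmap f l).
Proof.
elim: l => [//|z l IH] /= [-> | H] fx /=; first by rewrite fx; left.
case: (f z) => [w|] /=; [right|]; exact: IH.
Qed.

Definition castq (d : Order.disp_t) (I : joinSemilatticeType d) (A : I -> Type) (q : I)
  (e : {p : I & A p}) : option (A q) :=
  match projT1 e =P q with
  | ReflectT h => Some (eq_rect _ A (projT2 e) _ h)
  | ReflectF _ => None
  end.

Lemma castqE (d : Order.disp_t) (I : joinSemilatticeType d) (A : I -> Type) (q : I) (y : A q) :
  castq q (existT A q y) = Some y.
Proof. by rewrite /castq; case: eqP => // h; rewrite (eq_irrelevance h erefl). Qed.

Lemma existT_inj (d : Order.disp_t) (I : joinSemilatticeType d) (A : I -> Type) (q : I) (x y : A q) :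
  existT A q x = existT A q y -> x = y.
Proof. apply: Eqdep_dec.inj_pair2_eq_dec; exact: eq_comparable. Qed.

Lemma In_map (T U : Type) (f : T -> U) x (l : seq T) : List.In x l -> List.In (f x) (map f l).
Proof. elim: l => [//|y l IH] /= [->|H]; [left|right; exact: IH] => //. Qed.

Lemma In_catl (T : Type) x (l1 l2 : seq T) : List.In x l1 -> List.In x (l1 ++ l2).
Proof. by move=> H; apply: List.in_or_app; left. Qed.

Lemma In_catr (T : Type) x (l1 l2 : seq T) : List.In x l2 -> List.In x (l1 ++ l2).
Proof. by move=> H; apply: List.in_or_app; right. Qed.

Lemma joinl_const (d : Order.disp_t) (I : joinSemilatticeType d) (T : Type) (l : seq T) (x : I) :
  joinl x [seq x | _ <- l] = x.
Proof.
by elim: l => //= _ l IH; rewrite joinxx.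
Qed.

Lemma forward (sym : finType) (ar : sym -> nat)
  (d : Order.disp_t) (I : joinSemilatticeType d) (A : I -> Type)
  (alg : forall p, op_family ar (A p))
  (xi : forall p q, meta_maps ar (A p) (A q))
  (bot : forall s, ar s = 0 -> I)
  (hsys : directed_system alg xi) :
  locally_finite (plonka_op alg xi bot) -> (forall p : I, locally_finite (alg p)).
Proof.
case: hsys => _ Hid _.
move=> LF p gens.
set consts := pmap (fun s => match ar s =P 0 with
   | ReflectT h => Some (alg p s (fun i => False_rect _ (ord_absurd h i)))
   | ReflectF _ => None end) (enum sym).
have [elts Hel] := LF [seq existT A p x | x <- gens ++ consts].
exists (pmap (castq p) elts) => x Hx.
apply: (In_pmap (x := existT A p x)); last exact: castqE.
apply: Hel.
apply: (Hx (fun x => generated (plonka_op alg xi bot)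
   (fun y => List.In y [seq existT A p x | x <- gens ++ consts]) (existT A p x))).
- move=> s args Hargs.
  have [h|[n h]] : ar s = 0 \/ exists n, ar s = n.+1.
    by case: (ar s) => [|n]; [left|right; exists n].
  + apply: gen_base; apply: In_map; apply: In_catr.
    apply: (In_pmap (x := s)); first by apply: memIn; rewrite mem_enum.
    case: eqP => [h'|]; last by rewrite h.
    congr Some; congr (alg p s); apply: functional_extensionality => i.
    by exfalso; exact: ord_absurd h i.
  + have := gen_closed (args := fun i => existT A p (args i)) Hargs.
    rewrite (@plonka_succ _ _ _ _ _ alg xi bot s _ n h).
    have qp : plonka_index (fun i => existT A p (args i)) h = p.
      by rewrite /plonka_index /= joinl_const.
    move: (plonka_index _ h) qp => q qp; subst q.
    congr (generated _ _ (existT A p (alg p s _))).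
    apply: functional_extensionality => i /=; exact: Hid.
- move=> y Hy; apply: gen_base; apply: In_map; exact: In_catl.
Qed.

Lemma In_mem (T : eqType) (x : T) (s : seq T) : List.In x s -> x \in s.
Proof. elim: s => [//|y s IH] /= [->|/IH H]; rewrite in_cons ?eqxx // H orbT //. Qed.

Lemma In_flatten (T : Type) (x : T) (l : seq T) (ls : seq (seq T)) :
  List.In x l -> List.In l ls -> List.In x (flatten ls).
Proof.
elim: ls => [//|l0 ls IH] Hx /= [->|H]; [exact: In_catl | apply: In_catr; exact: IH].
Qed.

Lemma backward (sym : finType) (ar : sym -> nat)
  (d : Order.disp_t) (I : joinSemilatticeType d) (A : I -> Type)
  (alg : forall p, op_family ar (A p))
  (xi : forall p q, meta_maps ar (A p) (A q))
  (bot : forall s, ar s = 0 -> I)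
  (hbot : forall s (h : ar s = 0) (p : I), (bot s h <= p)%O)
  (hsys : directed_system alg xi) :
  (forall p : I, locally_finite (alg p)) -> locally_finite (plonka_op alg xi bot).
Proof.
case: hsys => _ Hid _.
move=> LFp gens.
pose botopt s : option I := match ar s =P 0 with
  | ReflectT h => Some (bot s h) | ReflectF _ => None end.
pose P := map (fun e => projT1 e) gens ++ pmap botopt (enum sym).
pose c r := count (fun p => (p <= r)%O) P.
pose PG (r : I) := forall u, (forall p, p \in P -> (p <= r)%O -> (p <= u)%O) -> (r <= u)%O.
pose W (r : I) := exists2 p, p \in P & (p <= r)%O.
pose pgen := generated (plonka_op alg xi bot) (fun y => List.In y gens).
have Inv : forall e, pgen e -> W (projT1 e) /\ PG (projT1 e).
  move=> e He; apply: (He (fun e => W (projT1 e) /\ PG (projT1 e))).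
  - move=> s args Hargs.
    have [h|[n h]] : ar s = 0 \/ exists n, ar s = n.+1.
      by case: (ar s) => [|n]; [left|right; exists n].
    + rewrite (@plonka_zero _ _ _ _ _ alg xi bot s args h) /=; split.
      * exists (bot s h); last exact: lexx.
        rewrite mem_cat; apply/orP; right; rewrite mem_pmap; apply/mapP; exists s.
          by rewrite mem_enum.
        rewrite /botopt; case: eqP => [h0|]; last by rewrite h.
        by rewrite (eq_irrelevance h0 h).
      * by move=> u _; exact: hbot.
    + rewrite (@plonka_succ _ _ _ _ _ alg xi bot s _ n h) /=.
      have le_i : forall i, (projT1 (args i) <= plonka_index args h)%O.
        move=> i; rewrite /plonka_index; apply: joinl_ge; apply: map_f; by rewrite mem_enum.
      have i0 : 'I_(ar s) by rewrite h; exact: ord0.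
      split.
      * have [p pP lep] := (Hargs i0).1; exists p => //; exact: le_trans lep (le_i i0).
      * move=> u Hu; rewrite /plonka_index; apply: joinl_le; last move=> y /mapP [i _ ->];
          apply: (Hargs _).2 => p pP lep; apply: Hu => //; exact: le_trans lep (le_i _).
  - move=> y Hy.
    have yP : projT1 y \in P by rewrite mem_cat; apply/orP; left; apply: In_mem; exact: In_map.
    split; first by exists (projT1 y) => //; exact: lexx.
    by move=> u Hu; apply: Hu => //; exact: lexx.
have cmono : forall r q, PG q -> (r < q)%O -> c r < c q.
  move=> r q PGq rq.
  have sub : forall p, (p <= r)%O -> (p <= q)%O := fun p pr => le_trans pr (ltW rq).
  rewrite ltn_neqAle sub_count ?andbT; last by move=> p; exact: sub.
  apply/negP => /eqP E.
  have H := count_eq_sub (a := fun p => (p <= r)%O) (b := fun p => (p <= q)%O) sub E.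
  have := PGq r H; by rewrite lt_geF.
pose qOf (l : seq I) := if l is x :: l' then Some (joinl x l') else None.
pose Q := pmap qOf [seq mask (val t) P | t <- enum {: (size P).-tuple bool}].
have inQ : forall q, W q -> PG q -> q \in Q.
  move=> q [p0 p0P p0q] PGq.
  have : p0 \in filter (fun p => (p <= q)%O) P by rewrite mem_filter p0q.
  case Efl: (filter (fun p => (p <= q)%O) P) => [//|x l'] _.
  have qE : q = joinl x l'.
    apply: le_anti; apply/andP; split.
    - apply: PGq => p pP pq.
      have : p \in filter (fun p => (p <= q)%O) P by rewrite mem_filter pq.
      rewrite Efl in_cons => /orP [/eqP->|pl]; last exact: joinl_ge.
      apply: joinl_ge_init; exact: lexx.
    - apply: joinl_le.
        have : x \in filter (fun p => (p <= q)%O) P by rewrite Efl mem_head.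
        by rewrite mem_filter => /andP [].
      move=> y yl.
      have : y \in filter (fun p => (p <= q)%O) P by rewrite Efl in_cons yl orbT.
      by rewrite mem_filter => /andP [].
  rewrite mem_pmap qE; apply/mapP; exists (x :: l') => //.
  have tsz : size [seq (p <= q)%O | p <- P] == size P by rewrite size_map.
  apply/mapP; exists (Tuple tsz); first by rewrite mem_enum.
  by rewrite /= -filter_mask Efl.
pose Yq (L : seq {p : I & A p}) (q : I) : seq (A q) := pmap (castq q) gens ++
  flatten [seq flatten [seq [seq xi (projT1 e) q s (lift ord0 i) (projT2 e) | i <- enum 'I_(ar s)]
     | s <- enum sym] | e <- L].
have step : forall n L, (forall e, pgen e -> c (projT1 e) < n -> List.In e L) ->
  forall q, PG q -> c q <= n -> forall e, pgen e -> forall y, e = existT A q y ->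
  generated (alg q) (fun z => List.In z (Yq L q)) y.
  move=> n L HL q PGq cq e He.
  suff : pgen e /\ (forall y, e = existT A q y -> generated (alg q) (fun z => List.In z (Yq L q)) y)
    by case.
  apply: (He (fun e => pgen e /\ (forall y, e = existT A q y -> generated (alg q) (fun z => List.In z (Yq L q)) y))).
  - move=> s args Hargs; split; first by apply: gen_closed => i; exact: (Hargs i).1.
    have [h|[n' h]] : ar s = 0 \/ exists n, ar s = n.+1.
      by case: (ar s) => [|n']; [left|right; exists n'].
    + rewrite (@plonka_zero _ _ _ _ _ alg xi bot s args h).
      move: (bot s h) => b y E.
      have /= bq := f_equal (fun e => projT1 e) E; subst b.
      rewrite -(existT_inj E); apply: gen_closed => i; exfalso; exact: ord_absurd h i.
    + have le_i : forall i, (projT1 (args i) <= plonka_index args h)%O.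
        move=> i; rewrite /plonka_index; apply: joinl_ge; apply: map_f; by rewrite mem_enum.
      rewrite (@plonka_succ _ _ _ _ _ alg xi bot s _ n' h).
      move: (plonka_index args h) le_i => q' le_i y E.
      have /= eq' := f_equal (fun e => projT1 e) E; subst q'.
      rewrite -(existT_inj E); apply: gen_closed => i.
      have := le_i i; have := Hargs i.
      case: (args i) => [p yi] /= [Hg Hs] lepq.
      case: (eqVneq p q) => [epq|npq].
      * subst p; rewrite Hid; exact: Hs yi erefl.
      * apply: gen_base; apply: In_catr.
        have ltpq : (p < q)%O by rewrite lt_neqAle npq lepq.
        have cp := cmono p q PGq ltpq.
        have Hin : List.In (existT A p yi) L.
          apply: HL Hg _; exact: leq_trans cp cq.
        apply: In_flatten (In_map _ Hin).
        apply: In_flatten; last first.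
          apply: (In_map (fun s => [seq xi p q s (lift ord0 i0) yi | i0 <- enum 'I_(ar s)])).
          apply: memIn; exact: mem_enum.
        apply: (In_map (fun i0 => xi p q s (lift ord0 i0) yi)); apply: memIn; exact: mem_enum.
  - move=> e0 He0; split; first exact: gen_base.
    move=> y Ey; subst e0; apply: gen_base; apply: In_catl; apply: In_pmap He0 (castqE _).
have cover : forall n, exists L, forall e, pgen e -> c (projT1 e) < n -> List.In e L.
  elim=> [|n [L HL]]; first by exists [::].
  have gather : forall Q0 : seq I, exists LL, forall q, q \in Q0 -> forall y,
      generated (alg q) (fun z => List.In z (Yq L q)) y -> List.In (existT A q y) LL.
    elim => [|q Q' [LL HLL]]; first by exists [::].
    have [Z HZ] := LFp q (Yq L q).
    exists (map (existT A q) Z ++ LL) => q'; rewrite in_cons => /orP [/eqP -> | q'Q] y Hy.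
      by apply: In_catl; apply: In_map; exact: HZ.
    by apply: In_catr; exact: HLL.
  have [LL HLL] := gather Q.
  exists LL => -[q y] He ce.
  have [Wq PGq] := Inv _ He.
  exact: (HLL q (inQ q Wq PGq) y (step n L HL q PGq ce _ He y erefl)).
have [L HL] := cover (size P).+1.
exists L => e He; apply: HL He _; rewrite ltnS; exact: count_size.
Qed.

Theorem theorem4p7 (sym : finType) (ar : sym -> nat)
  (d : Order.disp_t) (I : joinSemilatticeType d) (A : I -> Type)
  (alg : forall p, op_family ar (A p))
  (xi : forall p q, meta_maps ar (A p) (A q))
  (bot : forall s, ar s = 0 -> I)
  (hbot : forall s (h : ar s = 0) (p : I), (bot s h <= p)%O)
  (hsys : directed_system alg xi) :
  locally_finite (plonka_op alg xi bot) <-> (forall p : I, locally_finite (alg p)).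
Proof.
split; [exact: forward hsys | exact: backward hbot hsys].
Qed.
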